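(* Let $t$ be a positive integer and let $M$ be a matroid with the $(t,2t)$-property. If $M$ has a $t$-echidna $(S_1,\ldots, S_n)$ with $n\geq3t-1$, then $(S_1,\ldots, S_n)$ is also a $t$-coechidna of $M$.
   Context: A matroid $M$ has the $(t,2t)$-property if every $t$-element subset of $E(M)$ is contained in both a $2t$-element circuit and a $2t$-element cocircuit of $M$. A $t$-echidna of order $n$ of $M$ is a partition $(S_1,\ldots,S_n)$ of a subset of $E(M)$ such that $|S_i|=2$ for all $i\in\{1,\dots,n\}$, and $\bigcup_{i\in I}S_i$ is a circuit of $M$ for every $I\subseteq\{1,\dots,n\}$ with $|I|=t$. A $t$-coechidna of $M$ is a $t$-echidna of the dual matroid $M^*$ (i.e. the unions of any $t$ of the $S_i$ are cocircuits of $M$). *)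

(* Defs.v *)
From mathcomp Require Import all_boot.
Set Implicit Arguments. Unset Strict Implicit. Unset Printing Implicit Defensive.

Record matroid (T : finType) := Matroid {
  indep : {set T} -> bool;
  indep0 : indep set0;
  indep_sub : forall A B : {set T}, B \subset A -> indep A -> indep B;
  indep_aug : forall A B : {set T}, indep A -> indep B -> #|A| < #|B| ->
     exists2 x, x \in B :\: A & indep (x |: A)
}.

Section Defs.
Variable T : finType.

Definition circuit_of (ind : {set T} -> bool) (C : {set T}) : Prop :=
  ~~ ind C /\ forall D : {set T}, D \proper C -> ind D.

Variable M : matroid T.

Definition is_basis (B : {set T}) : bool :=
  indep M B && [forall A : {set T}, (B \subset A) && indep M A ==> (A == B)].

(* independent sets of the dual matroid M^*: sets disjoint from some basis *)
Definition dual_indep (A : {set T}) : bool :=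
  [exists B : {set T}, is_basis B && [disjoint A & B]].

Definition circuit (C : {set T}) : Prop := circuit_of (indep M) C.
Definition cocircuit (C : {set T}) : Prop := circuit_of dual_indep C.

Definition t2t_property (t : nat) : Prop :=
  forall X : {set T}, #|X| = t ->
    (exists C, [/\ circuit C, X \subset C & #|C| = 2 * t]) /\
    (exists D, [/\ cocircuit D, X \subset D & #|D| = 2 * t]).

Definition pair_partition (n : nat) (S : 'I_n -> {set T}) : Prop :=
  (forall i, #|S i| = 2) /\ (forall i j, i != j -> [disjoint S i & S j]).

Definition echidna (t n : nat) (S : 'I_n -> {set T}) : Prop :=
  pair_partition S /\
  forall I : {set 'I_n}, #|I| = t -> circuit (\bigcup_(i in I) S i).

Definition coechidna (t n : nat) (S : 'I_n -> {set T}) : Prop :=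
  pair_partition S /\
  forall I : {set 'I_n}, #|I| = t -> cocircuit (\bigcup_(i in I) S i).

End Defs.

(* Main.v *)
Require Import Defs.
From mathcomp Require Import all_boot.
From mathcomp Require Import zify.

Section Aux.
Variable T : finType.
Variable M : matroid T.

Lemma basis_of_card (A B : {set T}) :
  indep M A -> is_basis M B -> #|B| <= #|A| -> is_basis M A.
Proof.
move=> iA /andP[iB /forallP mB] le; apply/andP; split=> //.
apply/forallP=> A2; apply/implyP=> /andP[sA iA2].
apply/negPn/negP => ne.
have lt : #|A| < #|A2| by apply: proper_card; rewrite properEneq eq_sym ne sA.
have [x /setDP[xA2 xB] ix] := indep_aug iB iA2 (leq_ltn_trans le lt).
have := mB (x |: B); rewrite subsetUr ix /= => /eqP eB.
by move: xB; rewrite -eB setU11.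
Qed.

Lemma orth (C D : {set T}) e :
  circuit M C -> cocircuit M D -> C :&: D = [set e] -> False.
Proof.
move=> [dC minC] [dD minD] CD.
have : e \in C :&: D by rewrite CD set11.
case/setIP => eC eD.
have /existsP [B /andP[bB disB]] : dual_indep M (D :\ e).
  by apply: minD; rewrite properD1.
have iB : indep M B by case/andP: bB.
have iA : indep M (C :\ e) by apply: minC; rewrite properD1.
have sAD : C :\ e \subset ~: D.
  apply/subsetP => x; rewrite !inE => /andP[xe xC]; apply/negP => xD.
  have : x \in C :&: D by rewrite inE xC xD.
  by rewrite CD inE (negbTE xe).
pose P := fun X : {set T} => [&& C :\ e \subset X, X \subset ~: D & indep M X].
have PA : P (C :\ e) by rewrite /P subxx sAD iA.
have [A' PA' maxA'] := @arg_maxnP _ _ P (fun X => #|X|) PA.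
move: PA'; rewrite /P => /and3P[sAA' sA'D iA'].
case: (ltnP #|A'| #|B|) => [lt|ge].
- have [x /setDP[xB xA'] ix] := indep_aug iA' iB lt.
  case: (x =P e) => [xe|xne].
  + apply: (negP dC); apply: indep_sub ix; rewrite xe.
    apply/subsetP => y yC; rewrite in_setU1; case: (y =P e) => //= ye.
    by apply: (subsetP sAA'); rewrite !inE yC andbT; apply/eqP.
  + have xD : x \in ~: D.
      rewrite inE; apply/negP => xD.
      have : x \in D :\ e by rewrite !inE xD andbT; apply/eqP.
      by move=> xDe; rewrite (disjointFr disB xDe) in xB.
    have := maxA' (x |: A').
    rewrite /P ix (subset_trans sAA' (subsetUr _ _)) subUset sub1set xD sA'D.
    by rewrite cardsU1 xA' /= => /(_ isT); rewrite ltnn.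
- have bA' := basis_of_card _ _ iA' bB ge.
  apply: (negP dD); apply/existsP; exists A'; rewrite bA' /=.
  by rewrite disjoint_sym disjoints_subset.
Qed.

Lemma card_bigcup n (S : 'I_n -> {set T}) :
  pair_partition S -> forall I : {set 'I_n}, #|\bigcup_(i in I) S i| = 2 * #|I|.
Proof.
move=> [c2 dj] I; move e: #|I| => m.
elim: m I e => [|m IH] I cI.
  by rewrite (cards0_eq cI) big_set0 cards0.
have [i iI] : exists i, i \in I by apply/card_gt0P; rewrite cI.
rewrite (big_setD1 i iI) /= cardsU.
have disj : [disjoint S i & \bigcup_(k in I :\ i) S k].
  apply: bigcup_disjoint => k; rewrite in_setD1 => /andP[ki _].
  by apply: dj; rewrite eq_sym.
rewrite -setI_eq0 in disj; rewrite (eqP disj) cards0 subn0 c2.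
have := cardsD1 i I; rewrite iI cI => h.
rewrite IH; lia.
Qed.

End Aux.

Theorem lemma4p3 (T : finType) (M : matroid T) (t n : nat)
    (S : 'I_n -> {set T}) :
  0 < t -> t2t_property M t -> echidna M t S -> 3 * t - 1 <= n ->
  coechidna M t S.
Proof.
move=> t0 prop [[card2 disj] ech] hn; split; first by split.
move=> I cI.
set X := \bigcup_(i in I) S i.
have /fin_all_exists [f fS] : forall i : 'I_n, exists x : T, x \in S i.
  by move=> i; apply/card_gt0P; rewrite card2.
have finj : injective f.
  move=> i j eq; apply/eqP; apply/negPn/negP => ne.
  by have := disjointFr (disj i j ne) (fS i); rewrite eq fS.
have [_ [D [cD sYD cardD]]] := prop (f @: I) (etrans (card_imset _ finj) cI).
have key : forall j, #|S j :&: D| != 1.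
  move=> j; apply/negP => /cards1P [e Hj].
  set Z := [set k | [disjoint S k & D]].
  have /fin_all_exists [g gP] : forall k : 'I_n, exists y : T, (k \in Z) || (y \in S k :&: D).
    move=> k; case: (boolP (k \in Z)) => kZ.
      by exists (f k).
    rewrite inE in kZ.
    have /set0Pn [y Hy] : S k :&: D != set0 by rewrite setI_eq0.
    by exists y; rewrite Hy orbT.
  have cZ : #|~: Z| <= 2 * t.
    have <- : #|g @: ~: Z| = #|~: Z|.
      apply: card_in_imset => a b; rewrite !inE => aZ bZ eq.
      have := gP a; rewrite inE (negbTE aZ) /= => /setIP [ga _].
      have := gP b; rewrite inE (negbTE bZ) /= => /setIP [gb _].
      apply/eqP; apply/negPn/negP => ne.
      by have := disjointFr (disj a b ne) ga; rewrite eq gb.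
    rewrite -cardD; apply: subset_leq_card; apply/subsetP => y /imsetP [a aZ ->].
    by have := gP a; rewrite inE in aZ; rewrite (negbTE aZ) /= => /setIP [].
  have jZ : j \notin Z.
    rewrite inE -setI_eq0 Hj; apply/set0Pn; exists e; exact: set11.
  have cZ' : t.-1 <= #|Z|.
    have := cardsC Z; rewrite card_ord; lia.
  have [Z' sZ' cZ''] : exists2 Z' : {set 'I_n}, Z' \subset Z & #|Z'| = t.-1.
    move/card_geqP: cZ' => [s [us ss subs]].
    exists [set x in s]; last by rewrite cardsE; move/card_uniqP: us => ->.
    by apply/subsetP => x; rewrite inE => /subs.
  have cJ : #|j |: Z'| = t.
    rewrite cardsU1 cZ''.
    have -> : j \notin Z' by apply: contra jZ; apply: (subsetP sZ').
    lia.
  apply: (orth _ _ _ _ e (ech _ cJ) cD).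
  rewrite -Hj; apply/setP => y; rewrite !inE.
  apply/andP/andP => [[/bigcupP [k kJ yk] yD] | [yj yD]].
  - rewrite in_setU1 in kJ; case/orP: kJ => [/eqP kj | kZ']; first by rewrite -kj.
    have := subsetP sZ' _ kZ'; rewrite inE => dk.
    by rewrite (disjointFr dk yk) in yD.
  - split => //; apply/bigcupP; exists j => //; exact: setU11.
have sXD : X \subset D.
  apply/bigcupsP => i iI.
  have fiD : f i \in D by apply: (subsetP sYD); apply: imset_f.
  have le : #|S i :&: D| <= 2 by rewrite -(card2 i) subset_leq_card // subsetIl.
  have ge : 0 < #|S i :&: D| by apply/card_gt0P; exists (f i); rewrite inE fS fiD.
  have k2 : #|S i :&: D| = 2 by have := key i; move/eqP; lia.
  have : S i :&: D == S i by rewrite eqEcard subsetIl card2 k2.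
  by move/eqP <-; rewrite subsetIr.
have cX : #|X| = 2 * t by rewrite /X (@card_bigcup _ _ S (conj card2 disj)) cI.
have : X == D by rewrite eqEcard sXD cX cardD leqnn.
by move/eqP ->.
Qed.
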